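(* Let $\ket\psi$ be an $n$-qubit stabilizer state, $S=\mathrm{Weyl}(\ket\psi)$, and $T\subseteq S$ a subspace of dimension $n-t$. Then there exists a Clifford circuit $C$ such that $C\ket\psi=\ket{0^n}$, $C(S)=0^n\times\mathbb F_2^n$, and $C(T)=0^{n+t}\times\mathbb F_2^{n-t}$.
   Context: For $x=(a,b)\in\mathbb F_2^{2n}$, $W_x = i^{a\cdot b}X^{a_1}Z^{b_1}\otimes\cdots\otimes X^{a_n}Z^{b_n}$ ($a\cdot b$ over the integers); $\mathrm{Weyl}(\ket\psi)=\{x:W_x\ket\psi=\pm\ket\psi\}$. A Clifford circuit $C$ acts on $\mathbb F_2^{2n}$ by: $C(x)=y$ where $y$ is the unique element with $CW_xC^\dagger=\pm W_y$; for a set $A$, $C(A)=\{C(x):x\in A\}$. Equalities of states such as $C\ket\psi=\ket{0^n}$ are up to global phase. *)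

(* Defs.v *)
(* amplitudes in algC (algebraic complex numbers), which
   contain all amplitudes of stabilizer states / Clifford gates. *)
From HB Require Import structures.
From mathcomp Require Import all_boot all_order all_algebra algC.
Set Implicit Arguments. Unset Strict Implicit. Unset Printing Implicit Defensive.
Import Order.TTheory GRing.Theory Num.Theory.
Local Open Scope ring_scope.

Definition Basis (n : nat) := 'rV['F_2]_n.
(* Pauli labels x = (a,b) in F_2^{2n}; a = lsubmx x, b = rsubmx x. *)
Definition PLabel (n : nat) := 'rV['F_2]_(n + n).

Definition State (n : nat) := Basis n -> algC.
Definition Op (n : nat) := Basis n -> Basis n -> algC.

Definition op_mul n (A B : Op n) : Op n :=
  fun w z => \sum_(v : Basis n) A w v * B v z.
Definition op_adj n (A : Op n) : Op n := fun w z => (A z w)^*.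
Definition op_id n : Op n := fun w z => (w == z)%:R.
Definition op_apply n (A : Op n) (psi : State n) : State n :=
  fun w => \sum_(z : Basis n) A w z * psi z.

Definition ket0 n : State n := fun z => (z == 0)%:R.

Definition bit (c : 'F_2) : 'I_2 := if c == 0 then ord0 else ord_max.
Definition bitn (c : 'F_2) : nat := (c != 0).

(* single-qubit matrices (basis order |0>, |1>) *)
Definition pX : 'M[algC]_2 := \matrix_(i, j) (i != j)%:R.
Definition pZ : 'M[algC]_2 := \matrix_(i, j) ((i == j)%:R * (-1) ^+ i).
Definition pH : 'M[algC]_2 := (sqrtC 2)^-1 *: \matrix_(i, j) ((-1) ^+ (i * j)).
Definition pS : 'M[algC]_2 := \matrix_(i, j) ((i == j)%:R * 'i ^+ i).

Definition tens n (M : 'I_n -> 'M[algC]_2) : Op n :=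
  fun w z => \prod_(j < n) M j (bit (w ord0 j)) (bit (z ord0 j)).

(* a . b computed over the integers *)
Definition dotN n (a b : 'rV['F_2]_n) : nat := \sum_(j < n) bitn (a ord0 j) * bitn (b ord0 j).

Definition Weyl_op n (x : PLabel n) : Op n :=
  let a := lsubmx x in let b := rsubmx x in
  fun w z => 'i ^+ (dotN a b) *
    tens (fun j => pX ^+ (bitn (a ord0 j)) *m pZ ^+ (bitn (b ord0 j))) w z.

Definition Weyl n (psi : State n) (x : PLabel n) : Prop :=
  (forall w, op_apply (Weyl_op x) psi w = psi w) \/
  (forall w, op_apply (Weyl_op x) psi w = - psi w).

Inductive gate (n : nat) : Type :=
| Hgate of 'I_n
| Sgate of 'I_n
| CNOT (j k : 'I_n) of j != k.

Definition single n (j : 'I_n) (M : 'M[algC]_2) : Op n :=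
  tens (fun k => if k == j then M else 1%:M).

Definition cnot_op n (j k : 'I_n) : Op n :=
  fun w z => (w == z + (z ord0 j) *: delta_mx ord0 k)%:R.

Definition gate_op n (g : gate n) : Op n :=
  match g with
  | Hgate j => single j pH
  | Sgate j => single j pS
  | CNOT j k _ => cnot_op j k
  end.

(* A Clifford circuit is a finite sequence of gates, applied left to right. *)
Definition circuit (n : nat) := seq (gate n).
Definition circ_op n (c : circuit n) : Op n :=
  foldl (fun A g => op_mul (gate_op g) A) (@op_id n) c.

Definition stabilizer_state n (psi : State n) : Prop :=
  exists (U : circuit n) (c : algC), `|c| = 1 /\
    forall z, psi z = c * op_apply (circ_op U) (@ket0 n) z.

(* C W_x C^dagger = +- W_y, i.e. C(x) = y *)
Definition cliff_maps n (C : circuit n) (x y : PLabel n) : Prop :=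
  exists s : algC, (s = 1 \/ s = -1) /\
    forall w z, op_mul (op_mul (circ_op C) (Weyl_op x)) (op_adj (circ_op C)) w z
                = s * Weyl_op y w z.

Definition cliff_image n (C : circuit n) (A : PLabel n -> Prop) (y : PLabel n) : Prop :=
  exists x, A x /\ cliff_maps C x y.

(* Main.v *)
Require Import Defs.
From HB Require Import structures.
From mathcomp Require Import all_boot all_order all_algebra algC.
From mathcomp Require Import ring.
From Stdlib Require Import FunctionalExtensionality.
Import Order.TTheory GRing.Theory Num.Theory.
Set Implicit Arguments. Unset Strict Implicit. Unset Printing Implicit Defensive.
Local Open Scope ring_scope.

Lemma F2P (c : 'F_2) : c = 0 \/ c = 1.
Proof. case: c => [[|[|m]] Hm]; [left|right|]; try by apply/val_inj. by []. Qed.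

Lemma F2_addd (c : 'F_2) : c + c = 0.
Proof. by case: (F2P c) => ->; apply/val_inj. Qed.

Lemma F2_10 : (1 : 'F_2) != 0. Proof. by []. Qed.

Lemma sum2 (R : nmodType) (F : 'I_2 -> R) : \sum_(k < 2) F k = F ord0 + F ord_max.
Proof. rewrite !big_ord_recl big_ord0 addr0. congr (_ + F _). by apply/val_inj. Qed.

Lemma sumF2 (R : nmodType) (g : 'F_2 -> R) : \sum_(c : 'F_2) g c = g 0 + g 1.
Proof.
rewrite (bigD1 0) //= (bigD1 1) //= big1 ?addr0 // => c /andP[H1 H0].
by case: (F2P c) H1 H0 => ->; rewrite eqxx.
Qed.

Lemma bit_inj : injective bit.
Proof. by move=> c d; case: (F2P c) => ->; case: (F2P d) => ->. Qed.

Lemma bit0 : bit 0 = ord0. Proof. by []. Qed.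
Lemma bit1 : bit 1 = ord_max. Proof. by []. Qed.
Lemma bitn0 : bitn 0 = 0%N. Proof. by []. Qed.
Lemma bitn1 : bitn 1 = 1%N. Proof. by []. Qed.

Lemma bitnK (c : 'F_2) : (bitn c)%:R = c.
Proof. by case: (F2P c) => ->. Qed.

Lemma sum_prod_exchange n (F : 'I_n -> 'F_2 -> algC) :
  \sum_(v : Basis n) \prod_j F j (v ord0 j) = \prod_j \sum_(c : 'F_2) F j c.
Proof.
rewrite bigA_distr_bigA /=.
rewrite (reindex (fun v : Basis n => [ffun j => v ord0 j])) /=.
  by apply: eq_bigr => v _; apply: eq_bigr => j _; rewrite ffunE.
exists (fun f : {ffun 'I_n -> 'F_2} => (\row_j f j : Basis n)) => v _.
  by apply/rowP => j; rewrite mxE ffunE.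
by apply/ffunP => j; rewrite ffunE mxE.
Qed.

Definition adjM (M : 'M[algC]_2) : 'M[algC]_2 := \matrix_(i, j) (M j i)^*.

Lemma tens_mul n (M N : 'I_n -> 'M[algC]_2) :
  op_mul (tens M) (tens N) = tens (fun j => M j *m N j).
Proof.
apply: functional_extensionality => w; apply: functional_extensionality => z.
rewrite /op_mul /tens.
under eq_bigr do rewrite -big_split /=.
rewrite (sum_prod_exchange (fun j c => M j (bit (w ord0 j)) (bit c) * N j (bit c) (bit (z ord0 j)))).
by apply: eq_bigr => j _; rewrite sumF2 mxE sum2.
Qed.

Lemma tens_adj n (M : 'I_n -> 'M[algC]_2) :
  op_adj (tens M) = tens (fun j => adjM (M j)).
Proof.
apply: functional_extensionality => w; apply: functional_extensionality => z.
rewrite /op_adj /tens rmorph_prod; apply: eq_bigr => j _; by rewrite mxE.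
Qed.

Lemma exists_diff n (w z : 'rV['F_2]_n) : w != z -> exists j, w ord0 j != z ord0 j.
Proof.
move=> H; case/boolP: [exists j, w ord0 j != z ord0 j] => [/existsP//|/existsPn Hall].
by case/eqP: H; apply/rowP => j; move: (Hall j); rewrite negbK => /eqP.
Qed.

Lemma prod_ind n (P : 'I_n -> 'F_2 -> 'F_2 -> bool) (w z : 'rV['F_2]_n) :
  \prod_j ((P j (w ord0 j) (z ord0 j))%:R : algC) = [forall j, P j (w ord0 j) (z ord0 j)]%:R.
Proof.
case: forallP => [H|H].
  by rewrite big1 // => j _; rewrite H.
have [j Hj] : exists j, ~~ P j (w ord0 j) (z ord0 j).
  case/boolP: [exists j, ~~ P j (w ord0 j) (z ord0 j)] => [/existsP//|/existsPn Hall].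
  by case: H => j; move: (Hall j); rewrite negbK.
by rewrite (bigD1 j) //= (negbTE Hj) mul0r.
Qed.

Lemma tens_id n : tens (fun _ => 1%:M) = @op_id n.
Proof.
apply: functional_extensionality => w; apply: functional_extensionality => z.
rewrite /tens /op_id.
under eq_bigr do rewrite mxE (inj_eq bit_inj).
rewrite (@prod_ind n (fun _ c d => c == d)) //.
suff -> : [forall j, w ord0 j == z ord0 j] = (w == z) by [].
apply/idP/eqP => [/forallP H|->]; [apply/rowP => j; exact/eqP/H | exact/forallP].
Qed.

Definition op_sc n (s : algC) (A : Op n) : Op n := fun w z => s * A w z.

Lemma tens_scale n (j : 'I_n) (s : algC) (M : 'I_n -> 'M[algC]_2) :
  tens (fun k => if k == j then s *: M k else M k) = op_sc s (tens M).
Proof.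
apply: functional_extensionality => w; apply: functional_extensionality => z.
rewrite /tens /op_sc (bigD1 j) //= eqxx mxE (bigD1 j (P := predT)) //= -mulrA; congr (_ * (_ * _)).
by apply: eq_bigr => k /negbTE ->.
Qed.

Lemma sum_delta n (a : Basis n) (f : Basis n -> algC) :
  \sum_v (a == v)%:R * f v = f a.
Proof.
rewrite (bigD1 a) //= eqxx mul1r big1 ?addr0 // => v /negbTE.
by rewrite eq_sym => ->; rewrite mul0r.
Qed.

Lemma sum_delta' n (a : Basis n) (f : Basis n -> algC) :
  \sum_v f v * (v == a)%:R = f a.
Proof. rewrite -[RHS](sum_delta a f); apply: eq_bigr => v _; by rewrite mulrC eq_sym. Qed.

Lemma op_mulA n (A B C : Op n) : op_mul (op_mul A B) C = op_mul A (op_mul B C).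
Proof.
apply: functional_extensionality => w; apply: functional_extensionality => z.
rewrite /op_mul. under eq_bigr do rewrite mulr_suml /=.
rewrite exchange_big /=; apply: eq_bigr => u _; rewrite mulr_sumr /=.
by apply: eq_bigr => v _; rewrite mulrA.
Qed.

Lemma op_adj_mul n (A B : Op n) : op_adj (op_mul A B) = op_mul (op_adj B) (op_adj A).
Proof.
apply: functional_extensionality => w; apply: functional_extensionality => z.
rewrite /op_adj /op_mul rmorph_sum; apply: eq_bigr => v _; by rewrite rmorphM mulrC.
Qed.

Lemma op_adjK n (A : Op n) : op_adj (op_adj A) = A.
Proof.
apply: functional_extensionality => w; apply: functional_extensionality => z.
by rewrite /op_adj conjCK.
Qed.

Lemma op_mul1l n (A : Op n) : op_mul (@op_id n) A = A.
Proof.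
apply: functional_extensionality => w; apply: functional_extensionality => z.
by rewrite /op_mul /op_id sum_delta.
Qed.

Lemma op_mul1r n (A : Op n) : op_mul A (@op_id n) = A.
Proof.
apply: functional_extensionality => w; apply: functional_extensionality => z.
by rewrite /op_mul /op_id sum_delta'.
Qed.

Lemma op_adj_id n : op_adj (@op_id n) = @op_id n.
Proof.
apply: functional_extensionality => w; apply: functional_extensionality => z.
by rewrite /op_adj /op_id conjC_nat eq_sym.
Qed.

Lemma op_mul_scl n s (A B : Op n) : op_mul (op_sc s A) B = op_sc s (op_mul A B).
Proof.
apply: functional_extensionality => w; apply: functional_extensionality => z.
rewrite /op_mul /op_sc /= mulr_sumr; apply: eq_bigr => v _; by rewrite mulrA.
Qed.

Lemma op_mul_scr n s (A B : Op n) : op_mul A (op_sc s B) = op_sc s (op_mul A B).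
Proof.
apply: functional_extensionality => w; apply: functional_extensionality => z.
rewrite /op_mul /op_sc /= mulr_sumr; apply: eq_bigr => v _; by rewrite mulrCA.
Qed.

Lemma op_adj_sc n s (A : Op n) : op_adj (op_sc s A) = op_sc s^* (op_adj A).
Proof.
apply: functional_extensionality => w; apply: functional_extensionality => z.
by rewrite /op_adj /op_sc rmorphM.
Qed.

Lemma op_sc_sc n s t (A : Op n) : op_sc s (op_sc t A) = op_sc (s * t) A.
Proof.
apply: functional_extensionality => w; apply: functional_extensionality => z.
by rewrite /op_sc mulrA.
Qed.

Lemma op_apply_mul n (A B : Op n) psi :
  op_apply (op_mul A B) psi = op_apply A (op_apply B psi).
Proof.
apply: functional_extensionality => w.
rewrite /op_apply /op_mul. under eq_bigr do rewrite mulr_suml /=.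
rewrite exchange_big /=; apply: eq_bigr => u _; rewrite mulr_sumr /=.
by apply: eq_bigr => v _; rewrite mulrA.
Qed.

Lemma op_apply_id n psi : op_apply (@op_id n) psi = psi.
Proof. apply: functional_extensionality => w; by rewrite /op_apply /op_id sum_delta. Qed.

Lemma op_apply_sc n s (A : Op n) psi :
  op_apply (op_sc s A) psi = fun w => s * op_apply A psi w.
Proof.
apply: functional_extensionality => w.
rewrite /op_apply /op_sc /= mulr_sumr; apply: eq_bigr => v _; by rewrite mulrA.
Qed.

Lemma op_apply_scv n s (A : Op n) psi :
  op_apply A (fun w => s * psi w) = fun w => s * op_apply A psi w.
Proof.
apply: functional_extensionality => w.
rewrite /op_apply mulr_sumr; apply: eq_bigr => v _; by rewrite mulrCA.
Qed.

Lemma ord2P (i : 'I_2) : i = ord0 \/ i = ord_max.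
Proof. case: i => [[|[|m]] Hm]; [left|right|]; try by apply/val_inj. by []. Qed.

Definition m22 (a b c d : algC) : 'M[algC]_2 :=
  \matrix_(i, j) if i == ord0 then (if j == ord0 then a else b) else (if j == ord0 then c else d).

Lemma m22E a b c d :
  [/\ m22 a b c d ord0 ord0 = a, m22 a b c d ord0 ord_max = b,
      m22 a b c d ord_max ord0 = c & m22 a b c d ord_max ord_max = d].
Proof. by rewrite !mxE. Qed.

Lemma m22_eta (M : 'M[algC]_2) : M = m22 (M ord0 ord0) (M ord0 ord_max) (M ord_max ord0) (M ord_max ord_max).
Proof. by apply/matrixP => i j; rewrite mxE; case: (ord2P i) => ->; case: (ord2P j) => ->. Qed.

Lemma mulm22 a b c d a' b' c' d' :
  m22 a b c d *m m22 a' b' c' d' =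
  m22 (a*a'+b*c') (a*b'+b*d') (c*a'+d*c') (c*b'+d*d').
Proof.
apply/matrixP => i j; rewrite !mxE sum2 !mxE.
by case: (ord2P i) => ->; case: (ord2P j) => ->.
Qed.

Lemma adjm22 a b c d : adjM (m22 a b c d) = m22 a^* c^* b^* d^*.
Proof.
apply/matrixP => i j; rewrite !mxE.
by case: (ord2P i) => ->; case: (ord2P j) => ->.
Qed.

Lemma scalem22 s a b c d : s *: m22 a b c d = m22 (s*a) (s*b) (s*c) (s*d).
Proof.
apply/matrixP => i j; rewrite !mxE.
by case: (ord2P i) => ->; case: (ord2P j) => ->.
Qed.

Lemma id22 : (1%:M : 'M[algC]_2) = m22 1 0 0 1.
Proof. by apply/matrixP => i j; rewrite !mxE; case: (ord2P i) => ->; case: (ord2P j) => ->. Qed.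

Lemma pX22 : pX = m22 0 1 1 0.
Proof. by apply/matrixP => i j; rewrite !mxE; case: (ord2P i) => ->; case: (ord2P j) => ->. Qed.

Lemma pZ22 : pZ = m22 1 0 0 (-1).
Proof.
apply/matrixP => i j; rewrite !mxE; case: (ord2P i) => ->; case: (ord2P j) => -> //=;
by rewrite ?mul1r ?mul0r ?expr1 ?expr0.
Qed.

Lemma pS22 : pS = m22 1 0 0 'i.
Proof.
apply/matrixP => i j; rewrite !mxE; case: (ord2P i) => ->; case: (ord2P j) => -> //=;
by rewrite ?mul1r ?mul0r ?expr1 ?expr0.
Qed.

Definition hh : algC := (sqrtC 2)^-1.
Definition Hm := m22 1 1 1 (-1).

Lemma pH22 : pH = hh *: Hm.
Proof.
rewrite /pH /Hm; congr (_ *: _).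
apply/matrixP => i j; rewrite !mxE; case: (ord2P i) => ->; case: (ord2P j) => -> //=;
by rewrite ?mul1r ?mul0r ?expr1 ?expr0.
Qed.

Lemma hh_real : hh^* = hh.
Proof. by rewrite /hh fmorphV; congr (_^-1); apply: geC0_conj; rewrite sqrtC_ge0 ler0n. Qed.

Lemma hh2 : hh * hh = 2^-1.
Proof. by rewrite /hh -invfM -expr2 sqrtCK. Qed.

Definition Pm (a b : 'F_2) : 'M[algC]_2 :=
  'i ^+ (bitn a * bitn b) *: (pX ^+ bitn a *m pZ ^+ bitn b).

Ltac simp22 := rewrite ?(mul0r, mulr0, mul1r, mulr1, add0r, addr0, mulrN, mulNr, opprK, rmorph0, rmorph1, rmorphN1, rmorphN, conjCi).

Lemma id22r : (1 : 'M[algC]_2) = m22 1 0 0 1.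
Proof. exact: id22. Qed.

Lemma Pm00 : Pm 0 0 = m22 1 0 0 1.
Proof. rewrite /Pm /= !expr0 scale1r id22r mulm22; congr m22; simp22 => //. Qed.
Lemma Pm10 : Pm 1 0 = m22 0 1 1 0.
Proof. rewrite /Pm /= !expr0 scale1r expr1 id22r pX22 mulm22; congr m22; simp22 => //. Qed.
Lemma Pm01 : Pm 0 1 = m22 1 0 0 (-1).
Proof. rewrite /Pm /= !expr0 scale1r expr1 id22r pZ22 mulm22; congr m22; simp22 => //. Qed.
Lemma Pm11 : Pm 1 1 = m22 0 (-'i) 'i 0.
Proof. rewrite /Pm /= !expr1 pX22 pZ22 mulm22 scalem22; congr m22; simp22 => //. Qed.

Lemma adjHm : adjM Hm = Hm.
Proof. by rewrite /Hm adjm22; simp22. Qed.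

Lemma adj_scale s M : adjM (s *: M) = s^* *: adjM M.
Proof. by apply/matrixP => i j; rewrite !mxE rmorphM. Qed.

Lemma H_conj (a b : 'F_2) : exists s : algC, (s = 1 \/ s = -1) /\
  (pH *m Pm a b *m adjM pH = s *: Pm b a).
Proof.
rewrite pH22 adj_scale adjHm hh_real -!scalemxAl -scalemxAr scalerA hh2.
suff [s [Hs E]] : exists s : algC, (s = 1 \/ s = -1) /\ (Hm *m Pm a b *m Hm = (2 * s) *: Pm b a).
  exists s; split => //; rewrite E scalerA mulrA mulVf ?mul1r //.
  by rewrite pnatr_eq0.
rewrite /Hm.
case: (F2P a) => ->; case: (F2P b) => ->;
[exists 1 | exists 1 | exists 1 | exists (-1)];
(split; [first [by left | by right] | rewrite ?Pm00 ?Pm01 ?Pm10 ?Pm11 !mulm22 scalem22; congr m22; simp22; ring]).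
Qed.

Lemma S_conj (a b : 'F_2) : exists s : algC, (s = 1 \/ s = -1) /\
  (pS *m Pm a b *m adjM pS = s *: Pm a (b + a)).
Proof.
rewrite pS22 adjm22.
case: (F2P a) => ->; case: (F2P b) => ->;
[exists 1 | exists 1 | exists 1 | exists (-1)];
(split; [first [by left | by right] | rewrite ?addr0 ?add0r ?F2_addd ?Pm00 ?Pm01 ?Pm10 ?Pm11 !mulm22 scalem22; congr m22; simp22; try ring]).
all: by rewrite -expr2 sqrCi ?opprK.
Qed.


Lemma XZ_entry (a b u v : 'F_2) :
  (pX ^+ bitn a *m pZ ^+ bitn b) (bit u) (bit v) =
  (-1) ^+ (bitn b * bitn v) * (u == v + a)%:R.
Proof.
case: (F2P a) => ->; case: (F2P b) => ->; rewrite ?bitn0 ?bitn1 ?expr0 ?expr1 ?id22r ?pX22 ?pZ22 mulm22;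
case: (F2P u) => ->; case: (F2P v) => ->; rewrite ?bit0 ?bit1 !mxE /=; simp22 => //.
Qed.

Notation la x := (lsubmx x ord0).
Notation ra x := (rsubmx x ord0).

Lemma Weyl_tens n (x : PLabel n) :
  Weyl_op x = tens (fun j => Pm (la x j) (ra x j)).
Proof.
apply: functional_extensionality => w; apply: functional_extensionality => z.
rewrite /Weyl_op /tens /dotN expr_sum -big_split /=.
by apply: eq_bigr => j _; rewrite [in RHS]mxE.
Qed.

Lemma Weyl_entry n (x : PLabel n) w z :
  Weyl_op x w z = 'i ^+ (dotN (lsubmx x) (rsubmx x)) *
     ((-1) ^+ (dotN (rsubmx x) z) * (w == z + lsubmx x)%:R).
Proof.
rewrite /Weyl_op /tens; congr (_ * _).
under eq_bigr do rewrite XZ_entry.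
rewrite big_split /= prodrXr; congr (_ * _).
rewrite (@prod_ind n (fun j c d => c == d + la x j)).
suff -> : [forall j, w ord0 j == z ord0 j + la x j] = (w == z + lsubmx x) by [].
apply/idP/eqP => [/forallP H|->]; first by apply/rowP => j; rewrite mxE; exact/eqP/H.
by apply/forallP => j; rewrite mxE.
Qed.


Lemma F2_nat m : (m%:R : 'F_2) = (odd m)%:R.
Proof. have := (@Fp_nat_mod 2 isT m). move=> <-. by rewrite modn2. Qed.
Lemma F2_nat_odd m m' : (m%:R : 'F_2) = m'%:R -> odd m = odd m'.
Proof.
rewrite (F2_nat m) (F2_nat m'); case: (odd m); case: (odd m') => H.
- reflexivity.
- move: H; rewrite mulr1n mulr0n => /eqP; rewrite oner_eq0. discriminate.
- move: H; rewrite mulr1n mulr0n => /eqP; rewrite eq_sym oner_eq0. discriminate.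
- reflexivity.
Qed.

Lemma sign_eq m m' : (m%:R : 'F_2) = m'%:R -> ((-1) ^+ m : algC) = (-1) ^+ m'.
Proof. by move/F2_nat_odd => H; rewrite -signr_odd H signr_odd. Qed.

Lemma signP (k : nat) : ((-1) ^+ k : algC) = 1 \/ ((-1) ^+ k : algC) = -1.
Proof. rewrite -signr_odd; case: (odd k); [right; rewrite expr1|left; rewrite expr0]; reflexivity. Qed.

Lemma i_parity m m' : (m%:R : 'F_2) = m'%:R ->
  exists s : algC, (s = 1 \/ s = -1) /\ 'i ^+ m = s * 'i ^+ m'.
Proof.
move/F2_nat_odd => H.
exists ((-1) ^+ (m./2 + m'./2)); split; first exact: signP.
rewrite -{1}(odd_double_half m) -{2}(odd_double_half m') H.
rewrite !exprD -!muln2 !(mulnC _ 2) !exprM !sqrCi.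
have s2 : ((-1) ^+ m'./2 * (-1) ^+ m'./2 : algC) = 1.
  by rewrite -exprD -signr_odd oddD addbb expr0.
transitivity ((-1) ^+ m./2 * ('i : algC) ^+ odd m' * ((-1) ^+ m'./2 * (-1) ^+ m'./2)); last by ring.
by rewrite s2 mulr1 mulrC.
Qed.

Definition dotF n (u v : 'rV['F_2]_n) : 'F_2 := \sum_j u ord0 j * v ord0 j.

Lemma dotN_F2 n (u v : 'rV['F_2]_n) : ((dotN u v)%:R : 'F_2) = dotF u v.
Proof. rewrite /dotN natr_sum; apply: eq_bigr => j _; by rewrite natrM !bitnK. Qed.

Lemma dotFDr n (u v w : 'rV['F_2]_n) : dotF u (v + w) = dotF u v + dotF u w.
Proof. rewrite /dotF -big_split; apply: eq_bigr => j _; by rewrite mxE mulrDr. Qed.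
Lemma dotFDl n (u v w : 'rV['F_2]_n) : dotF (v + w) u = dotF v u + dotF w u.
Proof. rewrite /dotF -big_split; apply: eq_bigr => j _; by rewrite mxE mulrDl. Qed.
Lemma dotFZr n (u v : 'rV['F_2]_n) c : dotF u (c *: v) = c * dotF u v.
Proof. rewrite /dotF mulr_sumr; apply: eq_bigr => j _; by rewrite mxE mulrCA. Qed.
Lemma dotFZl n (u v : 'rV['F_2]_n) c : dotF (c *: v) u = c * dotF v u.
Proof. rewrite /dotF mulr_sumr; apply: eq_bigr => j _; by rewrite mxE mulrA. Qed.
Lemma dotF_er n (u : 'rV['F_2]_n) k : dotF u (delta_mx ord0 k) = u ord0 k.
Proof.
rewrite /dotF (bigD1 k) //= mxE !eqxx mulr1 big1 ?addr0 // => j /negbTE Hj.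
by rewrite mxE Hj andbF mulr0.
Qed.
Lemma dotF_el n (u : 'rV['F_2]_n) k : dotF (delta_mx ord0 k) u = u ord0 k.
Proof.
rewrite /dotF (bigD1 k) //= mxE !eqxx mul1r big1 ?addr0 // => j /negbTE Hj.
by rewrite mxE Hj andbF mul0r.
Qed.

Lemma addvv n (v : 'rV['F_2]_n) : v + v = 0.
Proof. by apply/rowP => j; rewrite !mxE F2_addd. Qed.

Definition piC n (j k : 'I_n) (z : 'rV['F_2]_n) : 'rV['F_2]_n := z + z ord0 j *: delta_mx ord0 k.

Lemma piC_add n (j k : 'I_n) u v : piC j k (u + v) = piC j k u + piC j k v.
Proof. have E : (u + v) ord0 j = u ord0 j + v ord0 j by rewrite mxE. by rewrite /piC E scalerDl addrACA. Qed.

Lemma piC_comp n (j k : 'I_n) z i : piC j k z ord0 i = z ord0 i + z ord0 j * (i == k)%:R.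
Proof. by rewrite /piC !mxE eqxx. Qed.

Lemma piC_invol n (j k : 'I_n) : j != k -> involutive (piC j k).
Proof.
move=> H z; rewrite {1}/piC piC_comp (negbTE H) mulr0 addr0.
by rewrite /piC -addrA addvv addr0.
Qed.

Definition conj_by n (G A : Op n) : Op n := op_mul (op_mul G A) (op_adj G).

Lemma conj_perm n (pi : Basis n -> Basis n) (A : Op n) :
  involutive pi ->
  conj_by (fun w z => (w == pi z)%:R) A = fun w z => A (pi w) (pi z).
Proof.
move=> Hpi.
apply: functional_extensionality => w; apply: functional_extensionality => z.
rewrite /conj_by /op_mul /op_adj.
transitivity (\sum_v A (pi w) v * (v == pi z)%:R); last by rewrite sum_delta'.
apply: eq_bigr => v _; congr (_ * _); last first.
  rewrite conjC_nat; suff -> : (z == pi v) = (v == pi z) by [].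
  by apply/eqP/eqP => [->|->]; rewrite Hpi.
transitivity (\sum_u (pi w == u)%:R * A u v); last by rewrite sum_delta.
apply: eq_bigr => u _; suff -> : (w == pi u) = (pi w == u) by [].
by apply/eqP/eqP => [->|<-]; rewrite Hpi.
Qed.

Definition F_gate n (g : gate n) (x : PLabel n) : PLabel n :=
  match g with
  | Hgate j => row_mx (lsubmx x + (la x j + ra x j) *: delta_mx ord0 j)
                      (rsubmx x + (la x j + ra x j) *: delta_mx ord0 j)
  | Sgate j => row_mx (lsubmx x) (rsubmx x + la x j *: delta_mx ord0 j)
  | CNOT j k _ => row_mx (lsubmx x + la x j *: delta_mx ord0 k)
                         (rsubmx x + ra x k *: delta_mx ord0 j)
  end.

Lemma adj_id : adjM 1%:M = 1%:M.
Proof. by rewrite id22 adjm22; simp22. Qed.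

Lemma conj_single n (j : 'I_n) E (P : 'I_n -> 'M[algC]_2) :
  conj_by (single j E) (tens P) = tens (fun k => if k == j then E *m P k *m adjM E else P k).
Proof.
rewrite /conj_by /single tens_mul tens_adj tens_mul; congr tens.
apply: functional_extensionality => k; case: (k == j) => //.
by rewrite adj_id mul1mx mulmx1.
Qed.

Lemma H_la n (j : 'I_n) x k :
  la (F_gate (Hgate j) x) k = if k == j then ra x j else la x k.
Proof.
rewrite /= row_mxKl !mxE eqxx /=; case: eqP => [->|_]; last by rewrite mulr0 addr0.
by rewrite mulr1 addrA F2_addd add0r.
Qed.
Lemma H_ra n (j : 'I_n) x k :
  ra (F_gate (Hgate j) x) k = if k == j then la x j else ra x k.
Proof.
rewrite /= row_mxKr !mxE eqxx /=; case: eqP => [->|_]; last by rewrite mulr0 addr0.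
by rewrite mulr1 addrCA F2_addd addr0.
Qed.
Lemma S_la n (j : 'I_n) x k : la (F_gate (Sgate j) x) k = la x k.
Proof. by rewrite /= row_mxKl. Qed.
Lemma S_ra n (j : 'I_n) x k :
  ra (F_gate (Sgate j) x) k = if k == j then ra x j + la x j else ra x k.
Proof.
rewrite /= row_mxKr !mxE eqxx /=; case: eqP => [->|_]; last by rewrite mulr0 addr0.
by rewrite mulr1.
Qed.

Lemma gate_conj n (g : gate n) (x : PLabel n) : exists s : algC, (s = 1 \/ s = -1) /\
  conj_by (gate_op g) (Weyl_op x) = op_sc s (Weyl_op (F_gate g x)).
Proof.
case: g => [j|j|j k Hjk] /=.
- have [s [Hs E]] := H_conj (la x j) (ra x j).
  exists s; split => //.
  rewrite !Weyl_tens conj_single -(tens_scale j); congr tens.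
  apply: functional_extensionality => k; rewrite H_la H_ra.
  by case: eqP => [->|]; rewrite ?E.
- have [s [Hs E]] := S_conj (la x j) (ra x j).
  exists s; split => //.
  rewrite !Weyl_tens conj_single -(tens_scale j); congr tens.
  apply: functional_extensionality => k; rewrite S_la S_ra.
  by case: eqP => [->|]; rewrite ?E.
- have Hinv := piC_invol Hjk.
  have -> : cnot_op j k = (fun w z => (w == piC j k z)%:R) by [].
  rewrite conj_perm //.
  have La : lsubmx (F_gate (CNOT Hjk) x) = piC j k (lsubmx x) by rewrite /= row_mxKl.
  have Rb : rsubmx (F_gate (CNOT Hjk) x) = rsubmx x + ra x k *: delta_mx ord0 j
    by rewrite /= row_mxKr.
  have Hd : ((dotN (lsubmx x) (rsubmx x))%:R : 'F_2) =
            (dotN (lsubmx (F_gate (CNOT Hjk) x)) (rsubmx (F_gate (CNOT Hjk) x)))%:R.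
    have D0 : (delta_mx ord0 j : 'rV['F_2]_n) ord0 k = 0 by rewrite mxE eq_sym (negbTE Hjk) andbF.
    rewrite !dotN_F2 La Rb /piC dotFDl dotFZl !dotFDr !dotFZr dotF_er !dotF_el D0 mulr0 addr0.
    by rewrite mulrC -addrA F2_addd addr0.
  have [s [Hs Ei]] := i_parity Hd.
  exists s; split => //.
  apply: functional_extensionality => w; apply: functional_extensionality => z.
  rewrite /op_sc !Weyl_entry Ei La Rb -mulrA; congr (s * (_ * (_ * _))).
    apply: sign_eq; rewrite !dotN_F2 /piC dotFDr dotFZr dotF_er dotFDl dotFZl dotF_el.
    by rewrite mulrC.
  suff -> : (piC j k w == piC j k z + lsubmx x) = (w == z + piC j k (lsubmx x)) by [].
  by rewrite -[RHS](inj_eq (can_inj Hinv)) piC_add Hinv.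
Qed.

Lemma circ_foldl n (C : circuit n) A0 :
  foldl (fun A g => op_mul (gate_op g) A) A0 C = op_mul (circ_op C) A0.
Proof.
elim: C A0 => [|g C IH] A0 /=; first by rewrite op_mul1l.
by rewrite /circ_op /= !IH op_mul1r op_mulA.
Qed.

Lemma circ_op_cat n (C1 C2 : circuit n) : circ_op (C1 ++ C2) = op_mul (circ_op C2) (circ_op C1).
Proof. by rewrite /circ_op foldl_cat circ_foldl. Qed.

Lemma circ_op_rcons n (C : circuit n) g : circ_op (rcons C g) = op_mul (gate_op g) (circ_op C).
Proof. by rewrite -cats1 circ_op_cat /circ_op /= op_mul1r. Qed.

Definition F_circ n (C : circuit n) (x : PLabel n) : PLabel n := foldl (fun y g => F_gate g y) x C.

Lemma F_circ_cat n (C1 C2 : circuit n) x : F_circ (C1 ++ C2) x = F_circ C2 (F_circ C1 x).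
Proof. by rewrite /F_circ foldl_cat. Qed.

Lemma F_circ_rcons n (C : circuit n) g x : F_circ (rcons C g) x = F_gate g (F_circ C x).
Proof. by rewrite /F_circ foldl_rcons. Qed.

Lemma conj_by_mul n (G C A : Op n) : conj_by (op_mul G C) A = conj_by G (conj_by C A).
Proof. by rewrite /conj_by op_adj_mul !op_mulA. Qed.

Lemma conj_by_sc n (G A : Op n) s : conj_by G (op_sc s A) = op_sc s (conj_by G A).
Proof. by rewrite /conj_by op_mul_scr op_mul_scl. Qed.

Lemma circ_conj n (C : circuit n) (x : PLabel n) : exists s : algC, (s = 1 \/ s = -1) /\
  conj_by (circ_op C) (Weyl_op x) = op_sc s (Weyl_op (F_circ C x)).
Proof.
elim/last_ind: C => [|C g [s [Hs E]]].
  exists 1; split; first by left.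
  rewrite /conj_by /circ_op /= op_adj_id op_mul1l op_mul1r.
  apply: functional_extensionality => w; apply: functional_extensionality => z.
  by rewrite /op_sc mul1r.
have [s' [Hs' E']] := gate_conj g (F_circ C x).
exists (s * s'); split.
  by case: Hs => ->; case: Hs' => ->; rewrite ?mul1r ?mulN1r ?opprK; auto.
by rewrite circ_op_rcons conj_by_mul E conj_by_sc E' op_sc_sc F_circ_rcons.
Qed.

Lemma pH_unit : adjM pH *m pH = 1%:M.
Proof.
rewrite pH22 adj_scale adjHm hh_real -scalemxAl -scalemxAr scalerA hh2 /Hm mulm22 id22 scalem22.
congr m22; simp22; rewrite ?mulVf ?pnatr_eq0 //; try ring.
all: rewrite -[1 + 1]/(2%:R) mulVf // pnatr_eq0 //.
Qed.

Lemma pS_unit : adjM pS *m pS = 1%:M.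
Proof.
rewrite pS22 adjm22 mulm22 id22; congr m22; simp22 => //.
by rewrite -expr2 sqrCi opprK.
Qed.

Lemma pH_adj : adjM pH = pH.
Proof. by rewrite pH22 adj_scale adjHm hh_real. Qed.

Lemma pS3 : pS *m (pS *m pS) = adjM pS.
Proof.
rewrite pS22 adjm22 !mulm22; congr m22; simp22 => //.
by rewrite mulrA -expr2 sqrCi mulN1r.
Qed.

Lemma single_adj n (j : 'I_n) E : op_adj (single j E) = single j (adjM E).
Proof.
rewrite /single tens_adj; congr tens; apply: functional_extensionality => k.
by case: (k == j); rewrite ?adj_id.
Qed.

Lemma single_unit n (j : 'I_n) E : adjM E *m E = 1%:M ->
  op_mul (op_adj (single j E)) (single j E) = @op_id n.
Proof.
move=> HE; rewrite single_adj /single tens_mul -tens_id; congr tens.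
apply: functional_extensionality => k; case: (k == j) => //.
by rewrite mulmx1.
Qed.

Lemma cnot_adj n (j k : 'I_n) (H : j != k) : op_adj (cnot_op j k) = cnot_op j k.
Proof.
apply: functional_extensionality => w; apply: functional_extensionality => z.
rewrite /op_adj /cnot_op conjC_nat.
have Hinv := piC_invol H.
suff -> : (z == w + w ord0 j *: delta_mx ord0 k) = (w == z + z ord0 j *: delta_mx ord0 k) by [].
by apply/eqP/eqP => ->; rewrite -/(piC j k _) Hinv.
Qed.

Lemma gate_unit n (g : gate n) : op_mul (op_adj (gate_op g)) (gate_op g) = @op_id n.
Proof.
case: g => [j|j|j k H] /=.
- exact: single_unit pH_unit.
- exact: single_unit pS_unit.
rewrite cnot_adj //.
have Hinv := piC_invol H.
apply: functional_extensionality => w; apply: functional_extensionality => z.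
rewrite /op_mul /op_id /cnot_op -/(piC j k w) -/(piC j k z).
transitivity (\sum_v (piC j k w == v)%:R * ((v == piC j k z)%:R : algC)).
  apply: eq_bigr => v _; congr (_%:R * _).
  suff -> : (piC j k w == v) = (w == piC j k v) by []. by apply/eqP/eqP => [<-|->]; rewrite Hinv.
rewrite sum_delta; congr (_%:R).
suff -> : (piC j k w == piC j k z) = (w == z) by [].
exact: (inj_eq (can_inj Hinv)).
Qed.

Lemma circ_unit n (C : circuit n) : op_mul (op_adj (circ_op C)) (circ_op C) = @op_id n.
Proof.
elim/last_ind: C => [|C g IH]; first by rewrite /circ_op /= op_adj_id op_mul1l.
rewrite circ_op_rcons op_adj_mul op_mulA -(op_mulA (op_adj (gate_op g))) gate_unit op_mul1l.
exact: IH.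
Qed.

Definition inv_gate n (g : gate n) : circuit n :=
  match g with
  | Sgate j => [:: Sgate j; Sgate j; Sgate j]
  | _ => [:: g]
  end.

Definition inv_circ n (C : circuit n) : circuit n := flatten (rev (map (@inv_gate n) C)).

Lemma inv_gate_op n (g : gate n) : circ_op (inv_gate g) = op_adj (gate_op g).
Proof.
case: g => [j|j|j k H]; rewrite /circ_op /= ?op_mul1r.
- by rewrite single_adj pH_adj.
- by rewrite single_adj /single !tens_mul -pS3; congr tens; apply: functional_extensionality => k;
  case: (k == j) => //; rewrite !mulmx1.
- by rewrite cnot_adj.
Qed.

Lemma inv_circ_op n (C : circuit n) : circ_op (inv_circ C) = op_adj (circ_op C).
Proof.
elim/last_ind: C => [|C g IH]; first by rewrite /inv_circ /circ_op /= op_adj_id.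
rewrite /inv_circ map_rcons rev_rcons /= circ_op_cat -/(inv_circ C) IH inv_gate_op.
by rewrite circ_op_rcons op_adj_mul.
Qed.

Lemma pm1M (s e : algC) : (s = 1 \/ s = -1) -> (e = 1 \/ e = -1) -> (s * e = 1 \/ s * e = -1).
Proof. by case=> ->; case=> ->; rewrite ?mul1r ?mulN1r ?opprK; auto. Qed.

Lemma pm1sq (s : algC) : (s = 1 \/ s = -1) -> s * s = 1.
Proof. by case=> ->; rewrite ?mul1r ?mulN1r ?opprK. Qed.

Lemma op_sc1 n (A : Op n) : op_sc 1 A = A.
Proof.
apply: functional_extensionality => w; apply: functional_extensionality => z.
by rewrite /op_sc mul1r.
Qed.

Lemma WeylE n (psi : State n) x : Weyl psi x <->
  exists e : algC, (e = 1 \/ e = -1) /\ op_apply (Weyl_op x) psi = (fun w => e * psi w).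
Proof.
split.
  case=> H; [exists 1|exists (-1)]; (split; [by auto|]);
  apply: functional_extensionality => w; by rewrite H ?mul1r ?mulN1r.
case=> e [[->|->] E]; [left|right] => w; by rewrite E ?mul1r ?mulN1r.
Qed.

Lemma Weyl_transfer n (C : circuit n) psi x :
  Weyl psi x <-> Weyl (op_apply (circ_op C) psi) (F_circ C x).
Proof.
have [s [Hs E]] := circ_conj C x.
set U := circ_op C in E *.
have Wy : Weyl_op (F_circ C x) = op_sc s (conj_by U (Weyl_op x)).
  by rewrite E op_sc_sc pm1sq // op_sc1.
have Wx : Weyl_op x = op_mul (op_adj U) (op_mul (op_sc s (Weyl_op (F_circ C x))) U).
  rewrite Wy op_sc_sc pm1sq // op_sc1 /conj_by -!op_mulA circ_unit op_mul1l.
  by rewrite op_mulA circ_unit op_mul1r.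
rewrite !WeylE; split.
  case=> e [He Ee]; exists (s * e); split; first exact: pm1M.
  rewrite Wy op_apply_sc /conj_by !op_apply_mul -(op_apply_mul (op_adj U)) circ_unit op_apply_id.
  rewrite Ee op_apply_scv; apply: functional_extensionality => w; by rewrite mulrA.
case=> e [He Ee]; exists (s * e); split; first exact: pm1M.
rewrite Wx !op_apply_mul op_apply_sc Ee.
have -> : (fun w => s * (e * op_apply U psi w)) = (fun w => (s * e) * op_apply U psi w).
  by apply: functional_extensionality => w; rewrite mulrA.
by rewrite op_apply_scv -op_apply_mul circ_unit op_apply_id.
Qed.

Lemma dotN0r n (b : 'rV['F_2]_n) : dotN b 0 = 0%N.
Proof. by rewrite /dotN big1 // => j _; rewrite mxE muln0. Qed.
Lemma dotN0l n (b : 'rV['F_2]_n) : dotN 0 b = 0%N.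
Proof. by rewrite /dotN big1 // => j _; rewrite mxE. Qed.

Lemma op_apply_ket0 n (A : Op n) w : op_apply A (@ket0 n) w = A w 0.
Proof. by rewrite /op_apply /ket0 sum_delta'. Qed.

Lemma ipow_neq0 m : ('i : algC) ^+ m != 0.
Proof. by rewrite expf_neq0 // neq0Ci. Qed.

Lemma Weyl_ket0 n (c : algC) (y : PLabel n) : c != 0 ->
  Weyl (fun z => c * ket0 z) y <-> lsubmx y = 0.
Proof.
move=> Hc; rewrite WeylE op_apply_scv.
have Ew : forall w, op_apply (Weyl_op y) (@ket0 n) w =
    'i ^+ dotN (lsubmx y) (rsubmx y) * (w == lsubmx y)%:R.
  by move=> w; rewrite op_apply_ket0 Weyl_entry dotN0r expr0 mul1r add0r.
split.
  case=> e [He E]; have := congr1 (fun f => f (lsubmx y)) E => /=.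
  rewrite Ew eqxx /ket0 mulr1; case: eqP => // _; rewrite mulr0 => /eqP.
  by rewrite mulr0 mulf_eq0 (negbTE Hc) (negbTE (ipow_neq0 _)).
move=> Ha; exists 1; split; first by left.
apply: functional_extensionality => w; by rewrite Ew Ha dotN0l expr0 mul1r mul1r /ket0.
Qed.

Lemma sign_inj m m' : ((-1) ^+ m : algC) = (-1) ^+ m' -> odd m = odd m'.
Proof.
rewrite -signr_odd -(signr_odd _ m'); case: (odd m); case: (odd m') => //; rewrite expr1 expr0 => H.
- have : (1 : algC) + 1 == 0 by rewrite -{1}H addNr.
  by rewrite -[1 + 1]/(2%:R : algC) pnatr_eq0.
- have : (1 : algC) + 1 == 0 by rewrite {1}H addNr.
  by rewrite -[1 + 1]/(2%:R : algC) pnatr_eq0.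
Qed.

Lemma Weyl_uniq n (y y' : PLabel n) s :
  Weyl_op y = op_sc s (Weyl_op y') -> (s = 1 \/ s = -1) -> y = y'.
Proof.
move=> E Hs.
have Hs0 : s != 0 by case: Hs => ->; rewrite ?oppr_eq0 oner_eq0.
have Ha : lsubmx y = lsubmx y'.
  have := congr1 (fun f => f (lsubmx y) 0) E; rewrite /op_sc /= !Weyl_entry !dotN0r !expr0.
  rewrite !mul1r add0r eqxx mulr1 add0r; case: eqP => // _; rewrite !mulr0 => /eqP.
  by rewrite (negbTE (ipow_neq0 _)).
have Es : forall z : Basis n, ('i ^+ dotN (lsubmx y) (rsubmx y) : algC) * (-1) ^+ dotN (rsubmx y) z =
    s * ('i ^+ dotN (lsubmx y') (rsubmx y') * (-1) ^+ dotN (rsubmx y') z).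
  move=> z; have := congr1 (fun f => f (z + lsubmx y) z) E; rewrite /op_sc /= !Weyl_entry -Ha eqxx.
  by rewrite !mulr1.
have E0 := Es 0; rewrite !dotN0r !expr0 !mulr1 in E0.
have Hb : rsubmx y = rsubmx y'.
  apply/rowP => l; have := Es (delta_mx ord0 l); rewrite E0 -mulrA => /(mulfI Hs0).
  move/(mulfI (ipow_neq0 _))/sign_inj => Ho.
  have := congr1 (fun b : bool => ((b : nat)%:R : 'F_2)) Ho => /=.
  by rewrite -!F2_nat !dotN_F2 !dotF_er.
by rewrite -[y]hsubmxK -[y']hsubmxK Ha Hb.
Qed.

Lemma F_gate_lin n (g : gate n) : linear (F_gate g).
Proof.
move=> c x y; case: g => [j|j|j k H] /=; rewrite scale_row_mx add_row_mx; congr row_mx;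
apply/rowP => i; rewrite !mxE; ring.
Qed.

Lemma F_circ_lin n (C : circuit n) : linear (F_circ C).
Proof.
elim: C => [|g C IH] c x y //=.
by rewrite /F_circ /= -/(F_circ C _) F_gate_lin IH.
Qed.

Definition mkLin n (f : PLabel n -> PLabel n) (pf : linear f) : {linear PLabel n -> PLabel n} :=
  HB.pack f (GRing.isLinear.Build _ _ _ _ f pf).
Definition mkEnd n f pf : 'End(PLabel n) := linfun (@mkLin n f pf).
Lemma mkEndE n f pf x : @mkEnd n f pf x = f x.
Proof. by rewrite /mkEnd lfunE. Qed.

Definition lin_circ n (C : circuit n) : 'End(PLabel n) := mkEnd (F_circ_lin C).
Lemma lin_circE n (C : circuit n) x : lin_circ C x = F_circ C x.
Proof. exact: mkEndE. Qed.

Lemma lin_circ_cat n (C1 C2 : circuit n) : lin_circ (C1 ++ C2) = (lin_circ C2 \o lin_circ C1)%VF.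
Proof. by apply/lfunP => x; rewrite comp_lfunE !lin_circE F_circ_cat. Qed.

Lemma conj_by_id n (A : Op n) : conj_by (@op_id n) A = A.
Proof. by rewrite /conj_by op_adj_id op_mul1l op_mul1r. Qed.

Lemma F_circ_invK n (C : circuit n) x : F_circ (inv_circ C) (F_circ C x) = x.
Proof.
have [s [Hs E]] := circ_conj C x.
have [s' [Hs' E']] := circ_conj (inv_circ C) (F_circ C x).
have : conj_by (circ_op (inv_circ C)) (conj_by (circ_op C) (Weyl_op x)) = Weyl_op x.
  by rewrite -conj_by_mul inv_circ_op circ_unit conj_by_id.
rewrite E conj_by_sc E' op_sc_sc => H.
by apply: esym; apply: (Weyl_uniq (esym H)); apply: pm1M.
Qed.

Lemma F_circ_inj n (C : circuit n) : injective (F_circ C).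
Proof. exact: can_inj (@F_circ_invK n C). Qed.

Definition cnot_only n (lim : nat) (g : gate n) : bool :=
  if g is CNOT j k _ then ((j < lim) && (k < lim))%N else false.

Lemma cnot_ket0 n (C : circuit n) lim : all (cnot_only lim) C ->
  op_apply (circ_op C) (@ket0 n) = @ket0 n.
Proof.
elim/last_ind: C => [|C g IH]; first by rewrite /circ_op /= op_apply_id.
rewrite all_rcons => /andP[Hg HC].
rewrite circ_op_rcons op_apply_mul IH //.
case: g Hg => // j k H _ /=.
apply: functional_extensionality => w.
rewrite op_apply_ket0 /cnot_op /ket0.
by rewrite mxE scale0r addr0.
Qed.

Lemma cnot_Z0 n (j k : 'I_n) (H : j != k) x : lsubmx x = 0 ->
  lsubmx (F_gate (CNOT H) x) = 0 /\
  forall i, ra (F_gate (CNOT H) x) i = ra x i + ra x k * (i == j)%:R.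
Proof.
move=> Hx; rewrite /= row_mxKl row_mxKr Hx mxE scale0r addr0; split => // i.
by rewrite !mxE eqxx.
Qed.

Lemma cnot_only_Z0 n (C : circuit n) lim x : all (cnot_only lim) C ->
  lsubmx x = 0 -> lsubmx (F_circ C x) = 0.
Proof.
elim: C x => [|g C IH] x //= /andP[Hg HC] Hx.
rewrite /F_circ /= -/(F_circ C _); apply: IH => //.
by case: g Hg => // j k H _; case: (cnot_Z0 H Hx).
Qed.

Definition eb n (i : nat) : PLabel n := row_mx 0 (\row_(k < n) ((k : nat) == i)%:R).

Lemma eb_l n i : lsubmx (eb n i) = 0. Proof. by rewrite row_mxKl. Qed.
Lemma eb_r n i k : ra (eb n i) k = ((k : nat) == i)%:R. Proof. by rewrite row_mxKr mxE. Qed.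

Lemma ra_D n (x y : PLabel n) j : ra (x + y) j = ra x j + ra y j. Proof. by rewrite !mxE. Qed.
Lemma ra_Z n c (x : PLabel n) j : ra (c *: x) j = c * ra x j. Proof. by rewrite !mxE. Qed.
Lemma ra_N n (x : PLabel n) j : ra (- x) j = - ra x j. Proof. by rewrite !mxE. Qed.
Lemma la_D n (x y : PLabel n) : lsubmx (x + y) = lsubmx x + lsubmx y.
Proof. by apply/rowP => j; rewrite !mxE. Qed.
Lemma la_Z n c (x : PLabel n) : lsubmx (c *: x) = c *: lsubmx x.
Proof. by apply/rowP => j; rewrite !mxE. Qed.
Lemma la_N n (x : PLabel n) : lsubmx (- x) = - lsubmx x.
Proof. by apply/rowP => j; rewrite !mxE. Qed.

Fixpoint Q n (d : nat) : {vspace PLabel n} :=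
  if d is d'.+1 then (Q n d' + <[eb n (n - d'.+1)]>)%VS else 0%VS.

Lemma QP n d y : (y \in Q n d) <->
  (lsubmx y = 0 /\ forall j : 'I_n, (j < n - d)%N -> ra y j = 0).
Proof.
elim: d y => [|d IH] y /=.
  rewrite memv0; split.
    move/eqP => ->; split; first by apply/rowP => j; rewrite !mxE.
    by move=> j _; rewrite !mxE.
  case=> Hl Hr; apply/eqP; rewrite -[y]hsubmxK Hl.
  have -> : rsubmx y = 0 by apply/rowP => j; rewrite [RHS]mxE Hr // subn0.
  by rewrite row_mx0.
split.
  case/memv_addP => q Hq [v /vlineP [c ->] ->].
  case/IH: Hq => Hql Hqr.
  rewrite la_D la_Z Hql eb_l scaler0 addr0; split => // j Hj.
  rewrite ra_D ra_Z eb_r Hqr; last by apply: (leq_trans Hj); apply: leq_sub2l.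
  by rewrite (ltn_eqF Hj) mulr0 addr0.
case=> Hl Hr; case: (ltnP d n) => Hdn.
  have Hp : (n - d.+1 < n)%N by rewrite ltn_subrL (leq_ltn_trans (leq0n d) Hdn).
  pose pi : 'I_n := Ordinal Hp.
  apply/memv_addP; exists (y - ra y pi *: eb n (n - d.+1)).
    apply/IH; rewrite la_D la_N la_Z Hl eb_l scaler0 oppr0 addr0; split => // j Hj.
    rewrite ra_D ra_N ra_Z eb_r.
    case: eqP => [Ej|Nj].
      have -> : j = pi by apply/val_inj.
      by rewrite /= mulr1 subrr.
    rewrite /= mulr0 oppr0 addr0 Hr //.
    move: Hj Nj; rewrite subnS; case: (n - d)%N => [|m] //= Hj Nj.
    by rewrite ltn_neqAle; apply/andP; split; [apply/eqP|rewrite -ltnS].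
  exists (ra y pi *: eb n (n - d.+1)); first by apply/vlineP; exists (ra y pi).
  by rewrite subrK.
apply/memv_addP; exists y; last by exists 0; [exact: mem0v | rewrite addr0].
apply/IH; split => // j Hj.
have Hz : (n - d = 0)%N by apply/eqP; rewrite subn_eq0.
by rewrite Hz in Hj.
Qed.

Lemma cnot_only_mono n lim lim' (g : gate n) : (lim <= lim')%N -> cnot_only lim g -> cnot_only lim' g.
Proof.
move=> H; case: g => // j k _ /= /andP[Hj Hk].
by rewrite (leq_trans Hj H) (leq_trans Hk H).
Qed.

Lemma clear_step n (u : PLabel n) (p : 'I_n) m : lsubmx u = 0 -> ra u p = 1 -> (m <= p)%N ->
  exists E : circuit n, all (cnot_only p.+1) E /\ lsubmx (F_circ E u) = 0 /\
   (forall i : 'I_n, (i < m)%N -> ra (F_circ E u) i = 0) /\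
   (forall i : 'I_n, (m <= i)%N -> ra (F_circ E u) i = ra u i).
Proof.
move=> Hu0 Hup; elim: m => [|m IH] Hm.
  by exists [::]; split => //; split => //; split => // i.
have [E [HE [HE0 [HElt HEge]]]] := IH (ltnW Hm).
have Hmn : (m < n)%N by apply: (leq_trans Hm); apply: ltnW.
pose mi : 'I_n := Ordinal Hmn.
have Hmp : mi != p by rewrite -(inj_eq val_inj) /= neq_ltn Hm.
set v := F_circ E u in HE0 HElt HEge *.
have Hvp : ra v p = 1 by rewrite HEge // ltnW.
case: (F2P (ra v mi)) => Hvm.
  exists E; split => //; split => //; split => i Hi.
    rewrite ltnS leq_eqVlt in Hi; case/orP: Hi => [/eqP Hi|Hi]; last exact: HElt.
    by have -> : i = mi by apply/val_inj.
  by apply: HEge; apply: ltnW.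
exists (rcons E (CNOT Hmp)); split.
  rewrite all_rcons HE andbT /= ltnS (ltnW Hm) /=; exact: leqnn.
have [H0 Hr] := cnot_Z0 Hmp HE0.
rewrite F_circ_rcons -/v; split => //; split => i Hi; rewrite Hr Hvp mul1r.
  rewrite ltnS leq_eqVlt in Hi; case/orP: Hi => [/eqP Hi|Hi].
    have -> : i = mi by apply/val_inj.
    by rewrite eqxx Hvm F2_addd.
  have -> : (i == mi) = false by apply/negbTE; rewrite -(inj_eq val_inj) /= neq_ltn Hi.
  by rewrite /= mulr0n addr0 HElt.
have -> : (i == mi) = false by apply/negbTE; rewrite -(inj_eq val_inj) /= neq_ltn Hi orbT.
by rewrite /= mulr0n addr0 HEge // ltnW.
Qed.

Lemma set_p n (u : PLabel n) (p j : 'I_n) : lsubmx u = 0 -> (j <= p)%N -> ra u j = 1 ->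
  exists E : circuit n, all (cnot_only p.+1) E /\ lsubmx (F_circ E u) = 0 /\
    ra (F_circ E u) p = 1 /\ (forall i : 'I_n, (p < i)%N -> ra (F_circ E u) i = ra u i).
Proof.
move=> Hu0 Hjp Hj.
case: (F2P (ra u p)) => Hp; last by exists [::].
have Hpj : p != j by apply/eqP => E; rewrite E Hj in Hp; move: Hp; apply/eqP.
exists [:: CNOT Hpj]; split; first by rewrite /= !ltnS Hjp leqnn.
have [H0 Hr] := cnot_Z0 Hpj Hu0.
rewrite /F_circ /=; split => //; split; first by rewrite Hr Hp Hj eqxx mul1r add0r.
move=> i Hi; rewrite Hr.
have -> : (i == p) = false by apply/negbTE; rewrite -(inj_eq val_inj) /= neq_ltn Hi orbT.
by rewrite /= mulr0n mulr0 addr0.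
Qed.

Lemma cnot_fix n (E : circuit n) lim y : all (cnot_only lim) E -> lsubmx y = 0 ->
  (forall k : 'I_n, (k < lim)%N -> ra y k = 0) -> F_circ E y = y.
Proof.
move=> HE Hl Hr; elim: E HE => [|g E IH] //= /andP[Hg HE].
rewrite /F_circ /= -/(F_circ E _).
suff -> : F_gate g y = y by exact: IH.
case: g Hg => // j k H /= /andP[Hj Hk].
by rewrite Hr // Hl mxE !scale0r !addr0 -Hl hsubmxK.
Qed.

Lemma line_swap n (U : {vspace PLabel n}) v e : v - e \in U -> (<[v]> + U = U + <[e]>)%VS.
Proof.
move=> H; apply/eqP; rewrite eqEsubv; apply/andP; split; rewrite subv_add; apply/andP; split.
- by rewrite -memvE -[v](subrK e) memv_add // memv_line.
- exact: addvSl.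
- exact: addvSr.
- rewrite -memvE; have -> : e = v + - (v - e) by rewrite opprB addrC subrK.
  by rewrite memv_add ?memv_line // memvN.
Qed.

Lemma gauss n (X : seq (PLabel n)) : free X -> all (fun x => lsubmx x == 0) X ->
  exists D : circuit n, all (cnot_only n) D /\ (lin_circ D @: <<X>>)%VS = Q n (size X).
Proof.
elim: X => [|w X IH].
  by move=> _ _; exists [::]; rewrite span_nil limg0.
rewrite free_cons => /andP[Hw HX] /= /andP[/eqP Hw0 HX0].
have [D [HD ED]] := IH HX HX0.
set d := size X in ED *.
set u := F_circ D w.
have Hu0 : lsubmx u = 0 by apply: cnot_only_Z0 HD Hw0.
have HuQ : u \notin Q n d.
  apply/negP; rewrite -ED => /memv_imgP [w' Hw' Ew'].
  rewrite lin_circE in Ew'; move/F_circ_inj: Ew' => Ew'.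
  by move: Hw; rewrite Ew' Hw'.
have [j [Hj Hj1]] : exists j : 'I_n, (j < n - d)%N /\ ra u j = 1.
  case/boolP: [exists j : 'I_n, (j < n - d)%N && (ra u j != 0)].
    case/existsP => j /andP[Hj Hj0]; exists j; split => //.
    by case: (F2P (ra u j)) Hj0 => ->; rewrite ?eqxx.
  move/existsPn => Hn; case/negP: HuQ; apply/QP; split => // j Hj.
  by move: (Hn j); rewrite Hj /= negbK => /eqP.
have Hdn : (d < n)%N by rewrite -subn_gt0 (leq_ltn_trans (leq0n j) Hj).
have Hp : (n - d.+1 < n)%N by rewrite ltn_subrL (leq_ltn_trans (leq0n d) Hdn).
pose p : 'I_n := Ordinal Hp.
have Hnd : (n - d = p.+1)%N by rewrite /= subnSK.
have Hjp : (j <= p)%N by rewrite -ltnS -Hnd.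
have [E1 [HE1 [H10 [H1p H1gt]]]] := set_p Hu0 Hjp Hj1.
have [E2 [HE2 [H20 [H2lt H2ge]]]] := clear_step H10 H1p (leqnn p).
set v := F_circ E2 (F_circ E1 u) in H20 H2lt H2ge.
have Hvp : ra v p = 1 by rewrite /v H2ge.
have HE12 : all (cnot_only p.+1) (E1 ++ E2) by rewrite all_cat HE1 HE2.
exists (D ++ (E1 ++ E2)); split.
  rewrite all_cat HD /=; apply: sub_all HE12 => g; exact: cnot_only_mono Hp.
rewrite lin_circ_cat limg_comp span_cons limgD limg_line ED lin_circE -/u.
rewrite limgD limg_line lin_circE F_circ_cat -/v.
rewrite (@eq_in_limg _ _ _ _ _ \1%VF); last first.
  move=> y /QP [Hyl Hyr]; rewrite lin_circE id_lfunE; apply: cnot_fix HE12 Hyl _.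
  by move=> k Hk; apply: Hyr; rewrite Hnd.
rewrite lim1g /=; apply: line_swap; apply/QP.
rewrite la_D la_N H20 eb_l oppr0 addr0; split => // i Hi.
rewrite ra_D ra_N eb_r.
case: eqP => [Ei|Ni].
  have -> : i = p by apply/val_inj.
  by rewrite Hvp /= subrr.
rewrite /= mulr0n subr0 H2lt //.
rewrite Hnd ltnS leq_eqVlt in Hi; case/orP: Hi => // /eqP Ei.
by case: Ni; rewrite Ei.
Qed.

Lemma cliff_mapsE n (C : circuit n) x y : cliff_maps C x y <-> y = F_circ C x.
Proof.
have [s' [Hs' E']] := circ_conj C x.
split.
  case=> s [Hs E].
  have E2 : conj_by (circ_op C) (Weyl_op x) = op_sc s (Weyl_op y).
    by apply: functional_extensionality => w; apply: functional_extensionality => z; apply: E.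
  rewrite E' in E2.
  have E3 : Weyl_op y = op_sc (s * s') (Weyl_op (F_circ C x)).
    by rewrite -op_sc_sc E2 op_sc_sc pm1sq // op_sc1.
  exact: Weyl_uniq E3 (pm1M Hs Hs').
move=> ->; exists s'; split => // w z.
by rewrite -/(conj_by _ _ w z) E'.
Qed.

Lemma lin_inj n (C : circuit n) : lker (lin_circ C) = 0%VS.
Proof.
apply/eqP/lker0P => x y; rewrite !lin_circE; exact: F_circ_inj.
Qed.

Unset Implicit Arguments.
Theorem lemma5p1 (n t : nat) (psi : State n) (T : {vspace PLabel n}) :
  stabilizer_state psi ->
  (forall x, x \in T -> Weyl psi x) ->
  (t <= n)%N ->
  \dim T = (n - t)%N ->
  exists C : circuit n,
    (exists c : algC, `|c| = 1 /\
       forall z, op_apply (circ_op C) psi z = c * ket0 z) /\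
    (forall y, cliff_image C (Weyl psi) y <-> lsubmx y = 0) /\
    (forall y, cliff_image C (fun x => x \in T) y <->
       (lsubmx y = 0 /\ forall j : 'I_n, (j < t)%N -> rsubmx y ord0 j = 0)).
Proof.
case=> U [c [Hc Hpsi]] HT Ht Hdim.
have Hc0 : c != 0 by rewrite -normr_eq0 Hc oner_eq0.
have Epsi : psi = fun z => c * op_apply (circ_op U) (@ket0 n) z.
  by apply: functional_extensionality => z; apply: Hpsi.
set V := inv_circ U.
have HV : op_apply (circ_op V) psi = fun z => c * ket0 z.
  by rewrite Epsi op_apply_scv -op_apply_mul /V inv_circ_op circ_unit op_apply_id.
pose X := (vbasis T : seq _).
pose Y := map (lin_circ V) X.
have HXT : <<X>>%VS = T by apply: span_basis; exact: vbasisP.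
have HYT : <<Y>>%VS = (lin_circ V @: T)%VS by rewrite -limg_span HXT.
have HsY : size Y = (n - t)%N by rewrite size_map size_tuple.
have HfY : free Y.
  apply: (@basis_free _ _ (lin_circ V @: T)%VS); rewrite basisEdim HYT subvv /=.
  by rewrite HsY limg_dim_eq ?Hdim // lin_inj capv0.
have HY0 : all (fun x => lsubmx x == 0) Y.
  apply/allP => y /mapP [x Hx ->]; apply/eqP; rewrite lin_circE.
  apply/(Weyl_ket0 _ Hc0); rewrite -HV -Weyl_transfer; apply: HT.
  by rewrite -HXT memv_span.
have [D [HD ED]] := gauss HfY HY0.
exists (V ++ D).
have HC : op_apply (circ_op (V ++ D)) psi = fun z => c * ket0 z.
  by rewrite circ_op_cat op_apply_mul HV op_apply_scv (cnot_ket0 HD).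
split; first by exists c; split => // z; rewrite HC.
split => y.
  split.
    case=> x [Hx /cliff_mapsE ->].
    by apply/(Weyl_ket0 _ Hc0); rewrite -HC -Weyl_transfer.
  move=> Hy.
  have [G HG1 HG2] := injF_bij (@F_circ_inj n (V ++ D)).
  exists (G y); split; last by apply/cliff_mapsE; rewrite HG2.
  rewrite (Weyl_transfer (V ++ D)) HC HG2; exact/(Weyl_ket0 _ Hc0).
have Himg : (lin_circ (V ++ D) @: T)%VS = Q n (n - t).
  by rewrite lin_circ_cat limg_comp -HYT ED HsY.
have -> : cliff_image (V ++ D) (fun x => x \in T) y <-> y \in Q n (n - t).
  rewrite -Himg; split.
    by case=> x [Hx /cliff_mapsE ->]; apply/memv_imgP; exists x => //; rewrite lin_circE.
  case/memv_imgP => x Hx ->; exists x; split => //; apply/cliff_mapsE; by rewrite lin_circE.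
by rewrite QP subKn.
Qed.
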